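(* Let $u,v,w$ be words of length $N$ with $|u|_0=|v|_0=|w|_0=:N_0$ and $N_1:=N-N_0$. For every perfect matching $M$ of $G^N_o(u,w)$: $o_U(M)+o_D(M)+o_R(M)+o_L(M)=N(N-1)/2+N_1$, $\quad o_L(M)+o_D(M)=\mathrm{d}(w)-\mathrm{d}(u)$, $\quad o_U(M)+o_L(M)=N_0(N_0-1)/2+\mathrm{d}(w)$. For every perfect matching $M$ of $G^N_e(v,w)$: $e_U(M)+e_D(M)+e_R(M)+e_L(M)=N(N-1)/2+N_0$, $\quad e_L(M)+e_U(M)=\mathrm{d}(w)-\mathrm{d}(v)$, $\quad e_D(M)+e_L(M)=N_1(N_1-1)/2+\mathrm{d}(w)$.
   Context: Let $N\ge 1$. $G^N$ is the induced subgraph of the square lattice $\mathbb{Z}^2$ formed by $N$ consecutive, horizontally centred rows having $3,5,\dots,2N+1$ vertices from top to bottom. It is bipartite; vertices of the same colour as the leftmost vertex of each row are called odd, the others even. Let $B_1,\dots,B_N$ be the even vertices of the bottom row, $L_1,\dots,L_N$ the leftmost vertices of the rows, and $R_1,\dots,R_N$ the rightmost vertices of the rows, each family numbered from left to right (so $L_1$ is the leftmost vertex of the bottom row and $R_1$ the rightmost vertex of the top row). Words of length $N$ are $u=u_1\cdots u_N\in\{0,1\}^N$; $|u|_0,|u|_1$ count $0$s and $1$s; $\mathrm{d}(u)$ is the number of pairs $i<j$ with $u_i=1,u_j=0$. $G^N_o(u,w)$ is the induced subgraph of $G^N$ obtained by deleting all $R_i$, all $B_i$ with $w_i=0$, and all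 $L_i$ with $u_i=0$. $G^N_e(v,w)$ is the induced subgraph obtained by deleting all $L_i$, all $B_i$ with $w_i=1$, and all $R_i$ with $v_i=1$. For a perfect matching $M$ of $G^N_o(u,w)$, orient each edge from its odd endpoint to its even endpoint; $o_U(M),o_D(M),o_L(M),o_R(M)$ denote the numbers of edges pointing up, down, left, right respectively. For a perfect matching $M$ of $G^N_e(v,w)$, orient each edge from its even endpoint to its odd endpoint; $e_U(M),e_D(M),e_L(M),e_R(M)$ denote the numbers of edges pointing up, down, left, right. *)

(* Defs.v *)
From mathcomp Require Import all_boot all_order all_algebra.
Set Implicit Arguments. Unset Strict Implicit. Unset Printing Implicit Defensive.

(* A vertex of the ambient grid is a pair (r, c) with
   r : 'I_N the row index counted from the TOP (0-based; paper row r+1)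
   and c : 'I_(2N+1) the column; the horizontal lattice coordinate is
   x = c - N (rows are horizontally centred at x = 0).
   Row r (0-based) of G^N consists of the 2(r+1)+1 vertices with
   |x| <= r+1, i.e.  N <= c + r + 1  and  c <= N + r + 1. *)
Definition vtx (N : nat) := ('I_N * 'I_(2 * N + 1))%type.

Definition inG (N : nat) (p : vtx N) : bool :=
  (N <= p.2 + p.1 + 1) && (p.2 <= N + p.1 + 1).

Definition adj (N : nat) (a b : vtx N) : bool :=
  ((a.1 == b.1 :> nat) && ((a.2.+1 == b.2 :> nat) || (b.2.+1 == a.2 :> nat)))
  || ((a.2 == b.2 :> nat) && ((a.1.+1 == b.1 :> nat) || (b.1.+1 == a.1 :> nat))).

(* "odd" vertices: same colour as the leftmost vertex of each row,
   i.e. x + (paper row index) = (c - N) + (r + 1) is even. *)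
Definition is_odd_v (N : nat) (p : vtx N) : bool := ~~ odd (p.2 + p.1 + N + 1).

(* Distinguished vertices, indexed by j : 'I_N (paper index i = j+1). *)
(* B_i : i-th even vertex (from the left) of the bottom row: x = -N+2i-1 *)
Definition Bv (N : nat) (j : 'I_N) (p : vtx N) : bool :=
  (p.1 == N.-1 :> nat) && (p.2 == j.*2.+1 :> nat).
(* L_i : leftmost vertex of paper row N+1-i *)
Definition Lv (N : nat) (j : 'I_N) (p : vtx N) : bool :=
  (p.1 == N.-1 - j :> nat) && (p.2 == j :> nat).
(* R_i : rightmost vertex of paper row i *)
Definition Rv (N : nat) (j : 'I_N) (p : vtx N) : bool :=
  (p.1 == j :> nat) && (p.2 == N + j + 1 :> nat).

(* Words of length N : N.-tuple bool, letter i is tnth u j (j = i-1). *)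
Definition nzeros (N : nat) (u : N.-tuple bool) : nat := count negb u.
Definition dw (N : nat) (u : N.-tuple bool) : nat :=
  #|[set p : 'I_N * 'I_N | (p.1 < p.2) && tnth u p.1 && ~~ tnth u p.2]|.

Definition Go_set (N : nat) (u w : N.-tuple bool) : {set vtx N} :=
  [set p : vtx N | inG p
     && [forall j : 'I_N, ~~ Rv j p]
     && [forall j : 'I_N, ~~ (Bv j p && ~~ tnth w j)]
     && [forall j : 'I_N, ~~ (Lv j p && ~~ tnth u j)]].

Definition Ge_set (N : nat) (v w : N.-tuple bool) : {set vtx N} :=
  [set p : vtx N | inG p
     && [forall j : 'I_N, ~~ Lv j p]
     && [forall j : 'I_N, ~~ (Bv j p && tnth w j)]
     && [forall j : 'I_N, ~~ (Rv j p && tnth v j)]].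

Definition perfect_matching (N : nat) (S : {set vtx N}) (M : {set {set vtx N}}) : Prop :=
  (forall e, e \in M -> exists a b, [/\ a \in S, b \in S, adj a b & e = [set a; b]])
  /\ (forall x, x \in S -> #|[set e in M | x \in e]| = 1).

(* Directions of a move a -> b (rows counted from the top). *)
Definition dirU (N : nat) (a b : vtx N) : bool := (b.1.+1 == a.1 :> nat) && (a.2 == b.2 :> nat).
Definition dirD (N : nat) (a b : vtx N) : bool := (a.1.+1 == b.1 :> nat) && (a.2 == b.2 :> nat).
Definition dirL (N : nat) (a b : vtx N) : bool := (a.1 == b.1 :> nat) && (b.2.+1 == a.2 :> nat).
Definition dirR (N : nat) (a b : vtx N) : bool := (a.1 == b.1 :> nat) && (a.2.+1 == b.2 :> nat).

(* number of edges of M pointing in direction dir, when oriented from the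
   odd endpoint to the even one (from_odd = true) or from the even endpoint
   to the odd one (from_odd = false) *)
Definition ndir (N : nat) (from_odd : bool) (dir : vtx N -> vtx N -> bool)
    (M : {set {set vtx N}}) : nat :=
  #|[set e in M | [exists a : vtx N, exists b : vtx N,
       [&& is_odd_v a == from_odd, is_odd_v b == ~~ from_odd,
           e == [set a; b] & dir a b]]]|.

Definition oU N := @ndir N true (@dirU N).
Definition oD N := @ndir N true (@dirD N).
Definition oL N := @ndir N true (@dirL N).
Definition oR N := @ndir N true (@dirR N).
Definition eU N := @ndir N false (@dirU N).
Definition eD N := @ndir N false (@dirD N).
Definition eL N := @ndir N false (@dirL N).
Definition eR N := @ndir N false (@dirR N).

(* Main.v *)
Require Import Defs.
From mathcomp Require Import all_boot all_order all_algebra zify ring lra.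
Set Implicit Arguments. Unset Strict Implicit. Unset Printing Implicit Defensive.
Import Order.TTheory GRing.Theory Num.Theory.
Local Open Scope ring_scope.

Lemma adj_odd (N : nat) (a b : vtx N) : adj a b -> is_odd_v b = ~~ is_odd_v a.
Proof.
case: a b => [a1 a2] [b1 b2]; rewrite /adj /is_odd_v /=.
case/orP => /andP [/eqP E /orP [] /eqP F].
all: have : (b2 + b1 + N + 1 = (a2 + a1 + N + 1).+1 \/ (b2 + b1 + N + 1).+1 = a2 + a1 + N + 1)%N by lia.
all: by case=> [->|<-]; rewrite /= ?negbK.
Qed.

Definition ind N (fo : bool) (dir : vtx N -> vtx N -> bool) (e : {set vtx N}) : bool :=
  [exists a : vtx N, exists b : vtx N,
       [&& is_odd_v a == fo, is_odd_v b == ~~ fo, e == [set a; b] & dir a b]].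

Lemma ind_pair N fo (dir : vtx N -> vtx N -> bool) (a b : vtx N) :
  is_odd_v a = fo -> is_odd_v b = ~~ fo -> ind fo dir [set a; b] = dir a b.
Proof.
move=> oa ob; apply/existsP/idP.
- case=> a' /existsP [b' /and4P [/eqP oa' /eqP ob' /eqP E d]].
  have ha' : a' \in [set a; b] by rewrite E !inE eqxx.
  have hb' : b' \in [set a; b] by rewrite E !inE eqxx orbT.
  move: ha' hb' oa' ob' d; rewrite !inE => /orP [] /eqP -> /orP [] /eqP ->;
  rewrite ?oa ?ob => h1 h2 //; exfalso; move: h1 h2; case: (fo) => // -> //.
- move=> d; exists a; apply/existsP; exists b.
  by rewrite oa ob !eqxx d.
Qed.

Lemma nbb (b : bool) : (~~ b == b) = false. Proof. by case: b. Qed.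

Definition sg N (fo : bool) (p : vtx N) : int := if is_odd_v p == fo then -1 else 1.
Definition colz N (p : vtx N) : int := (p.2 : nat)%:Z.
Definition rowz N (p : vtx N) : int := (p.1 : nat)%:Z.

Lemma adj_neq N (a b : vtx N) : adj a b -> a != b.
Proof. move=> h; apply/eqP => E; move: (adj_odd h); rewrite E; by case: (is_odd_v b). Qed.

Lemma sum_pair N (a b : vtx N) (h : vtx N -> int) : a != b ->
  \sum_(p in [set a; b]) h p = h a + h b.
Proof. by move=> ab; rewrite big_setU1 ?inE // big_set1. Qed.

Lemma edge_core N fo (a b : vtx N) : adj a b -> is_odd_v a = fo ->
  let e := [set a; b] in
  [/\ (ind fo (@dirU N) e + ind fo (@dirD N) e + ind fo (@dirL N) e + ind fo (@dirR N) e = 1)%N,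
      (ind fo (@dirR N) e)%:Z - (ind fo (@dirL N) e)%:Z = \sum_(p in e) sg fo p * colz p &
      (ind fo (@dirD N) e)%:Z - (ind fo (@dirU N) e)%:Z = \sum_(p in e) sg fo p * rowz p].
Proof.
move=> h oa e; have ob : is_odd_v b = ~~ fo by rewrite (adj_odd h) oa.
rewrite /e !ind_pair // !sum_pair ?adj_neq // /sg oa ob eqxx.
rewrite nbb.
move: h; rewrite /adj /dirU /dirD /dirL /dirR /colz /rowz.
clear oa ob e; case: a b => [a1 a2] [b1 b2] /=.
move: (a1 : nat) (a2 : nat) (b1 : nat) (b2 : nat) => x1 x2 y1 y2.
repeat (case: eqP => /= ?); split; lia.
Qed.

Lemma adj_sym N (a b : vtx N) : adj a b -> adj b a.
Proof.
rewrite /adj; case: a b => [a1 a2] [b1 b2] /=.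
move: (a1 : nat) (a2 : nat) (b1 : nat) (b2 : nat) => x1 x2 y1 y2.
by rewrite (eq_sym x1) (eq_sym x2) (orbC (x2.+1 == y2)) (orbC (x1.+1 == y1)).
Qed.

Lemma edge_all N fo (a b : vtx N) : adj a b ->
  let e := [set a; b] in
  [/\ (ind fo (@dirU N) e + ind fo (@dirD N) e + ind fo (@dirL N) e + ind fo (@dirR N) e = 1)%N,
      (ind fo (@dirR N) e)%:Z - (ind fo (@dirL N) e)%:Z = \sum_(p in e) sg fo p * colz p &
      (ind fo (@dirD N) e)%:Z - (ind fo (@dirU N) e)%:Z = \sum_(p in e) sg fo p * rowz p].
Proof.
move=> h e; have [oa|oa] := eqVneq (is_odd_v a) fo; first exact: edge_core.
have ob : is_odd_v b = fo by rewrite (adj_odd h); move: oa; case: (is_odd_v a); case: (fo).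
have -> : e = [set b; a] by rewrite /e setUC.
exact: edge_core (adj_sym h) ob.
Qed.

Lemma pm_sum N (S : {set vtx N}) M (h : vtx N -> int) : perfect_matching S M ->
  \sum_(p in S) h p = \sum_(e in M) \sum_(p in e) h p.
Proof.
case=> H1 H2.
have -> : \sum_(p in S) h p = \sum_(p in S) \sum_(e in M | p \in e) h p.
  apply: eq_bigr => p pS.
  rewrite (eq_bigl (fun e => e \in [set e in M | p \in e])); last by move=> e; rewrite inE.
  by rewrite sumr_const H2.
rewrite (exchange_big_dep (fun e => e \in M)) //=; last by move=> ? ? _ /andP [].
apply: eq_bigr => e eM; apply: eq_bigl => p; rewrite eM /=.
case: (H1 e eM) => a [b [aS bS _ ->]].
rewrite !inE; have [->|_] := eqVneq p a; first by rewrite aS.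
by have [->|_] := eqVneq p b; rewrite ?bS ?andbF.
Qed.

Lemma ndir_sum N fo (dir : vtx N -> vtx N -> bool) M :
  ndir fo dir M = (\sum_(e in M) ind fo dir e)%N.
Proof.
rewrite /ndir -sum1_card big_mkcond /= [RHS]big_mkcond /=.
apply: eq_bigr => e _; rewrite inE /ind; case: (e \in M) => //=.
Qed.

Lemma pm_facts N fo (S : {set vtx N}) M : perfect_matching S M ->
 [/\ (ndir fo (@dirU N) M + ndir fo (@dirD N) M + ndir fo (@dirL N) M + ndir fo (@dirR N) M = #|M|)%N,
     \sum_(p in S) (1 : int) = (2 * #|M|)%N%:Z,
     (ndir fo (@dirR N) M)%:Z - (ndir fo (@dirL N) M)%:Z = \sum_(p in S) sg fo p * colz p &
     (ndir fo (@dirD N) M)%:Z - (ndir fo (@dirU N) M)%:Z = \sum_(p in S) sg fo p * rowz p].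
Proof.
move=> pm; have [H1 H2] := pm.
have E e : e \in M -> exists a b, adj a b /\ e = [set a; b].
  by move=> /H1 [a [b [_ _ h ->]]]; exists a, b.
split.
- rewrite !ndir_sum -!big_split /= -sum1_card; apply: eq_bigr => e /E [a [b [h ->]]].
  by case: (edge_all fo h).
- rewrite (pm_sum _ pm) -natz -sum1_card natrM natr_sum mulr_sumr; apply: eq_bigr => e /E [a [b [h ->]]].
  by rewrite sum_pair ?adj_neq.
- rewrite (pm_sum _ pm) !ndir_sum -!natz !natr_sum -sumrB; apply: eq_bigr => e /E [a [b [h ->]]].
  by case: (edge_all fo h) => _ <- _; rewrite !natz.
- rewrite (pm_sum _ pm) !ndir_sum -!natz !natr_sum -sumrB; apply: eq_bigr => e /E [a [b [h ->]]].
  by case: (edge_all fo h) => _ _ <-; rewrite !natz.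
Qed.
Definition Gset N (pR pB pL : pred 'I_N) : {set vtx N} :=
  [set p : vtx N | inG p && [forall j, ~~ (Rv j p && pR j)]
     && [forall j, ~~ (Bv j p && pB j)] && [forall j, ~~ (Lv j p && pL j)]].

Lemma RptP N (j : 'I_N) : (N + j + 1 < 2 * N + 1)%N.
Proof. have := ltn_ord j; lia. Qed.
Lemma BptP1 N (j : 'I_N) : (N.-1 < N)%N.
Proof. have := ltn_ord j; lia. Qed.
Lemma BptP2 N (j : 'I_N) : (j.*2.+1 < 2 * N + 1)%N.
Proof. have := ltn_ord j; rewrite -muln2; lia. Qed.
Lemma LptP1 N (j : 'I_N) : (N.-1 - j < N)%N.
Proof. have := ltn_ord j; lia. Qed.
Lemma LptP2 N (j : 'I_N) : (j < 2 * N + 1)%N.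
Proof. have := ltn_ord j; lia. Qed.

Definition Rpt N (j : 'I_N) : vtx N := (j, Ordinal (RptP j)).
Definition Bpt N (j : 'I_N) : vtx N := (Ordinal (BptP1 j), Ordinal (BptP2 j)).
Definition Lpt N (j : 'I_N) : vtx N := (Ordinal (LptP1 j), Ordinal (LptP2 j)).

Lemma Rv_pt N (j : 'I_N) p : Rv j p = (p == Rpt j).
Proof. by case: p => a b; rewrite /Rv xpair_eqE. Qed.
Lemma Bv_pt N (j : 'I_N) p : Bv j p = (p == Bpt j).
Proof. by case: p => a b; rewrite /Bv xpair_eqE. Qed.
Lemma Lv_pt N (j : 'I_N) p : Lv j p = (p == Lpt j).
Proof. by case: p => a b; rewrite /Lv xpair_eqE. Qed.

Lemma inG_R N (j : 'I_N) : inG (Rpt j).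
Proof. rewrite /inG /=; have := ltn_ord j; lia. Qed.
Lemma inG_B N (j : 'I_N) : inG (Bpt j).
Proof. rewrite /inG /=; have := ltn_ord j; rewrite -muln2; lia. Qed.
Lemma inG_L N (j : 'I_N) : inG (Lpt j).
Proof. rewrite /inG /=; have := ltn_ord j; lia. Qed.

Lemma R_inj N : injective (@Rpt N).
Proof. by move=> i j /(congr1 fst). Qed.
Lemma B_inj N : injective (@Bpt N).
Proof. move=> i j /(congr1 (fun p => nat_of_ord p.2)) /= E; apply/val_inj => /=; lia. Qed.
Lemma L_inj N : injective (@Lpt N).
Proof. move=> i j /(congr1 (fun p => nat_of_ord p.2)) /= E; exact/val_inj. Qed.

Lemma RB N (i j : 'I_N) : Rpt i != Bpt j.
Proof.
apply/negP => /eqP E; have E1 := congr1 (fun p => nat_of_ord p.1) E;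
have E2 := congr1 (fun p => nat_of_ord p.2) E; move: E1 E2 => /= E1 E2.
have := ltn_ord j; have := ltn_ord i; rewrite -muln2 in E2; lia.
Qed.
Lemma RL N (i j : 'I_N) : Rpt i != Lpt j.
Proof.
apply/negP => /eqP E; have E2 := congr1 (fun p => nat_of_ord p.2) E; move: E2 => /= E2.
have := ltn_ord j; lia.
Qed.
Lemma BL N (i j : 'I_N) : Bpt i != Lpt j.
Proof.
apply/negP => /eqP E; have E1 := congr1 (fun p => nat_of_ord p.1) E;
have E2 := congr1 (fun p => nat_of_ord p.2) E; move: E1 E2 => /= E1 E2.
have := ltn_ord j; have := ltn_ord i; rewrite -muln2 in E2; lia.
Qed.

Lemma mem_img N (F : 'I_N -> vtx N) (P : pred 'I_N) p :
  (p \in [set F j | j in P]) = [exists j, P j && (p == F j)].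
Proof.
apply/imsetP/existsP => [[j Pj ->]|[j /andP [Pj /eqP ->]]]; first by exists j; apply/andP; split; [exact: Pj|].

by exists j.
Qed.

Lemma sum4 (I : finType) (A B C D E : pred I) (F : I -> int) :
  (forall p, (if A p then F p else 0) = (if B p then F p else 0) + (if C p then F p else 0)
     + (if D p then F p else 0) + (if E p then F p else 0)) ->
  \sum_(p | A p) F p = \sum_(p | B p) F p + \sum_(p | C p) F p + \sum_(p | D p) F p + \sum_(p | E p) F p.
Proof. move=> H; rewrite (big_mkcond A) (big_mkcond B) (big_mkcond C) (big_mkcond D) (big_mkcond E) -!big_split; exact: eq_bigr. Qed.

Lemma Gset_sum N pR pB pL (f : vtx N -> int) :
  \sum_(p in Gset pR pB pL) f p = \sum_(p | inG p) f p - \sum_(j | pR j) f (Rpt j)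
     - \sum_(j | pB j) f (Bpt j) - \sum_(j | pL j) f (Lpt j).
Proof.
rewrite -(big_imset _ (in2W (@R_inj N))) -(big_imset _ (in2W (@B_inj N)))
        -(big_imset _ (in2W (@L_inj N))) /=.
apply/eqP; rewrite eq_sym !subr_eq; apply/eqP.
apply: sum4 => p.
rewrite !mem_img inE.
have eq1 : [forall j, ~~ (Rv j p && pR j)] = ~~ [exists j, pR j && (p == Rpt j)].
  by rewrite negb_exists; apply/eq_forallb => j; rewrite Rv_pt andbC.
have eq2 : [forall j, ~~ (Bv j p && pB j)] = ~~ [exists j, pB j && (p == Bpt j)].
  by rewrite negb_exists; apply/eq_forallb => j; rewrite Bv_pt andbC.
have eq3 : [forall j, ~~ (Lv j p && pL j)] = ~~ [exists j, pL j && (p == Lpt j)].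
  by rewrite negb_exists; apply/eq_forallb => j; rewrite Lv_pt andbC.
rewrite eq1 eq2 eq3.
have hR : [exists j, pR j && (p == Rpt j)] -> inG p /\ ~~ [exists j, pB j && (p == Bpt j)] /\ ~~ [exists j, pL j && (p == Lpt j)].
  case/existsP => j /andP [_ /eqP ->]; split; first exact: inG_R.
  split; apply/existsP => -[k /andP [_ /eqP E]].
  - by move: (RB j k); rewrite E eqxx.
  - by move: (RL j k); rewrite E eqxx.
have hB : [exists j, pB j && (p == Bpt j)] -> inG p /\ ~~ [exists j, pL j && (p == Lpt j)].
  case/existsP => j /andP [_ /eqP ->]; split; first exact: inG_B.
  apply/existsP => -[k /andP [_ /eqP E]].
  by move: (BL j k); rewrite E eqxx.
have hL : [exists j, pL j && (p == Lpt j)] -> inG p.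
  by case/existsP => j /andP [_ /eqP ->]; exact: inG_L.
move: hR hB hL.
case: [exists j, pR j && (p == Rpt j)]; case: [exists j, pB j && (p == Bpt j)];
case: [exists j, pL j && (p == Lpt j)]; case: (inG p) => //= hR hB hL;
rewrite ?add0r ?addr0 //.
all: try by case: (hR isT) => // _ [].
all: try by case: (hB isT).
all: try by case: (hL isT).
Qed.

Lemma zero_nat lo hi (F : nat -> int) : (forall i, (lo <= i < hi)%N -> F i = 0) ->
  \sum_(lo <= i < hi) F i = 0.
Proof. by move=> H; rewrite big_nat_cond big1 // => i /andP [h _]; apply: H. Qed.

Lemma window n a m (g : nat -> int) : (a + m <= n)%N ->
  \sum_(c < n) (if (a <= c)%N && (c < a + m)%N then g c else 0) = \sum_(i < m) g (a + i)%N.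
Proof.
move=> h; rewrite -(big_mkord xpredT (fun c => if (a <= c)%N && (c < a + m)%N then g c else 0)).
rewrite (@big_cat_nat _ _ _ a) /=; [|lia|lia].
rewrite (@big_cat_nat _ _ _ (a + m) a n) /=; [|lia|lia].
rewrite (zero_nat (lo := 0)); last by move=> i /andP [_ hi]; rewrite leqNgt hi.
rewrite add0r (zero_nat (lo := a + m)); last by move=> i /andP [hi _]; rewrite ltnNge hi andbF.
rewrite addr0 -{1}(add0n a) big_addn addKn big_mkord.
apply: eq_bigr => i _; rewrite addnC.
have -> : (a <= a + i)%N && (a + i < a + m)%N by apply/andP; split; have := ltn_ord i; lia.
by [].
Qed.

Lemma G_sum N (g : nat -> nat -> int) :
  \sum_(p : vtx N | inG p) g p.1 p.2 = \sum_(r < N) \sum_(i < r.*2 + 3) g r (N - r.+1 + i)%N.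
Proof.
rewrite big_mkcond.
transitivity (\sum_(r < N) \sum_(c < 2 * N + 1) (if inG ((r, c) : vtx N) then g r c else 0)).
  by rewrite pair_bigA; apply: eq_bigr; case.
apply: eq_bigr => r _.
rewrite -(@window (2 * N + 1) (N - r.+1) (r.*2 + 3) (g r)); last by have := ltn_ord r; rewrite -muln2; lia.
apply: eq_bigr => c _; rewrite /inG /=.
have := ltn_ord r => hr.
have -> : ((N <= c + r + 1) && (c <= N + r + 1))%N = ((N - r.+1 <= c) && (c < N - r.+1 + (r.*2 + 3)))%N.
  by rewrite -muln2; apply/idP/idP => /andP [h1 h2]; apply/andP; split; lia.
by [].
Qed.

Definition alt (i : nat) : int := if odd i then 1 else -1.
Definition sgn (fo : bool) : int := if fo then 1 else -1.

Lemma alt_sum k : \sum_(i < k.*2.+1) alt i = -1.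
Proof.
elim: k => [|k IH]; first by rewrite big_ord1.
rewrite doubleS big_ord_recr big_ord_recr /= IH /alt /= odd_double /=; lia.
Qed.

Lemma alt_sum_i k : \sum_(i < k.*2.+1) alt i * (i : nat)%:Z = - k%:Z.
Proof.
elim: k => [|k IH]; first by rewrite big_ord1 mulr0.
rewrite doubleS big_ord_recr big_ord_recr /= IH /alt /= odd_double /=.
rewrite -!muln2; lia.
Qed.

Definition sgc N (fo : bool) (r c : nat) : int := if ~~ odd (c + r + N + 1) == fo then -1 else 1.

Lemma sgc_row N fo r i : (r < N)%N -> sgc N fo r (N - r.+1 + i) = sgn fo * alt i.
Proof.
move=> hr; rewrite /sgc.
have -> : (N - r.+1 + i + r + N + 1 = N.*2 + i)%N by rewrite -muln2; lia.
rewrite oddD odd_double /= /alt /sgn.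
by case: fo; case: (odd i).
Qed.

Lemma row1 N (r : 'I_N) : \sum_(i < r.*2 + 3) (1 : int) = (r.*2 + 3)%N%:Z.
Proof. by rewrite sumr_const card_ord -natz. Qed.

Lemma rowc N fo (r : 'I_N) :
  \sum_(i < r.*2 + 3) sgc N fo r (N - r.+1 + i) * (N - r.+1 + i)%N%:Z = - sgn fo * N%:Z.
Proof.
have hr := ltn_ord r.
have -> : (r.*2 + 3 = (r.+1).*2.+1)%N by rewrite doubleS; lia.
rewrite (eq_bigr (fun i : 'I_(r.+1).*2.+1 => sgn fo * ((N - r.+1)%N%:Z * alt i + alt i * (i : nat)%:Z))); last first.
  by move=> i _; rewrite sgc_row // PoszD; ring.
rewrite -mulr_sumr big_split /= -mulr_sumr alt_sum_i alt_sum.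
have E : N%:Z = (N - r.+1)%N%:Z + (r.+1)%:Z by rewrite -PoszD; congr Posz; lia.
rewrite E; ring.
Qed.

Lemma rowr N fo (r : 'I_N) :
  \sum_(i < r.*2 + 3) sgc N fo r (N - r.+1 + i) * (r : nat)%:Z = - sgn fo * (r : nat)%:Z.
Proof.
have hr := ltn_ord r.
have -> : (r.*2 + 3 = (r.+1).*2.+1)%N by rewrite doubleS; lia.
rewrite (eq_bigr (fun i : 'I_(r.+1).*2.+1 => sgn fo * (r : nat)%:Z * alt i)); last first.
  by move=> i _; rewrite sgc_row //; ring.
rewrite -mulr_sumr alt_sum; ring.
Qed.
Local Close Scope ring_scope.

Lemma cnt_lt N j : \sum_(i < N) ((i : nat) < j : nat) = minn j N.
Proof.
elim: N => [|N IH]; first by rewrite big_ord0; lia.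
rewrite big_ord_recr /= IH; case: ltnP => h; lia.
Qed.

Lemma pairs N (A : pred 'I_N) :
  2 * \sum_i \sum_j (A i && A j && (i < j)%N : nat) + \sum_i (A i : nat) = (\sum_i (A i : nat)) ^ 2.
Proof.
have sq : (\sum_i (A i : nat)) ^ 2 = \sum_i \sum_j (A i && A j : nat).
  rewrite expnS expn1 big_distrl /=; apply: eq_bigr => i _.
  by rewrite big_distrr /=; apply: eq_bigr => j _; rewrite mulnb.
have sw : \sum_i \sum_j (A i && A j && (i < j)%N : nat) = \sum_i \sum_j (A i && A j && (j < i)%N : nat).
  rewrite exchange_big /=; apply: eq_bigr => i _; apply: eq_bigr => j _; by rewrite (andbC (A j)).
have dg : \sum_i (A i : nat) = \sum_i \sum_j (A i && A j && (i == j) : nat).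
  apply: eq_bigr => i _; rewrite (bigD1 i) //= eqxx andbb andbT big1 ?addn0 //.
  by move=> j /negPf; rewrite eq_sym => ->; rewrite andbF.
rewrite sq mul2n -addnn {2}sw dg -!big_split /=; apply: eq_bigr => i _.
rewrite -!big_split /=; apply: eq_bigr => j _.
case: (A i); case: (A j) => //=.
rewrite -val_eqE /=; by case: ltngtP.
Qed.

Lemma dw_sum N (t : N.-tuple bool) :
  dw t = \sum_i \sum_j (((i : 'I_N) < (j : 'I_N))%N && tnth t i && ~~ tnth t j : nat).
Proof.
rewrite /dw -sum1_card big_mkcond /= pair_bigA /=; apply: eq_bigr => p _.
by rewrite inE; case: ifP.
Qed.

Lemma cnt_gt N (i : 'I_N) : \sum_(j < N) ((i : nat) < j : nat) = N - i.+1.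
Proof.
have h1 : \sum_(j < N) ((i : nat) < j : nat) + \sum_(j < N) ((j : nat) < i.+1 : nat) = N.
  rewrite -big_split /= -[RHS]card_ord -sum1_card; apply: eq_bigr => j _.
  by rewrite ltnS; case: leqP.
have := ltn_ord i; rewrite cnt_lt in h1; lia.
Qed.

Lemma dw_zeros N (t : N.-tuple bool) :
  \sum_(j < N) (~~ tnth t j : nat) * j = dw t + \sum_i \sum_j (~~ tnth t i && ~~ tnth t j && ((i : 'I_N) < (j : 'I_N))%N : nat).
Proof.
have -> : \sum_(j < N) (~~ tnth t j : nat) * j = \sum_(j < N) \sum_(i < N) (~~ tnth t j && ((i : nat) < j) : nat).
  apply: eq_bigr => j _.
  rewrite [X in _ * X](_ : _ = \sum_(i < N) ((i : nat) < j : nat)); last by rewrite cnt_lt; have := ltn_ord j; lia.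
  by rewrite big_distrr /=; apply: eq_bigr => i _; rewrite mulnb.
rewrite exchange_big dw_sum -big_split /=; apply: eq_bigr => i _.
rewrite -big_split /=; apply: eq_bigr => j _.
by case: (tnth t i); case: (tnth t j); case: ltnP.
Qed.

Lemma dw_ones N (t : N.-tuple bool) :
  \sum_(i < N) (tnth t i : nat) * (N - i.+1) = dw t + \sum_i \sum_j (tnth t i && tnth t j && ((i : 'I_N) < (j : 'I_N))%N : nat).
Proof.
rewrite dw_sum -big_split /=; apply: eq_bigr => i _.
rewrite -cnt_gt big_distrr -big_split /=; apply: eq_bigr => j _.
by case: (tnth t i); case: (tnth t j); case: ltnP.
Qed.

Local Open Scope ring_scope.

Lemma sg_sgc N fo (p : vtx N) : sg fo p = sgc N fo p.1 p.2.
Proof. by []. Qed.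

Lemma sgR N fo (j : 'I_N) : sg fo (Rpt j) = - sgn fo.
Proof.
rewrite /sg /is_odd_v /=.
have -> : (N + j + 1 + j + N + 1 = (N + j + 1).*2)%N by rewrite -muln2; lia.
by rewrite odd_double; case: fo.
Qed.
Lemma sgB N fo (j : 'I_N) : sg fo (Bpt j) = sgn fo.
Proof.
rewrite /sg /is_odd_v /=; have := ltn_ord j => hj.
have -> : (j.*2 + N.-1 + N + 1 = (j + N).*2)%N by rewrite -!muln2; lia.
by rewrite odd_double; case: fo.
Qed.
Lemma sgL N fo (j : 'I_N) : sg fo (Lpt j) = - sgn fo.
Proof.
rewrite /sg /is_odd_v /=; have := ltn_ord j => hj.
have -> : (j + (N.-1 - j) + N + 1 = N.*2)%N by rewrite -!muln2; lia.
by rewrite odd_double; case: fo.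
Qed.

Lemma G1 N : \sum_(p : vtx N | inG p) (1 : int) = \sum_(r < N) (r.*2 + 3)%N%:Z.
Proof. have := G_sum N (fun _ _ => (1 : int)) => /= ->; apply: eq_bigr => r _; exact: row1. Qed.

Lemma GX N fo : \sum_(p : vtx N | inG p) sg fo p * colz p = - sgn fo * (N%:Z * N%:Z).
Proof.
have := G_sum N (fun r c => sgc N fo r c * c%:Z) => /= ->.
rewrite (eq_bigr (fun _ => - sgn fo * N%:Z)); last by move=> r _; exact: rowc.
by rewrite sumr_const card_ord -mulr_natr natz mulrA.
Qed.

Lemma GY N fo : \sum_(p : vtx N | inG p) sg fo p * rowz p = - sgn fo * \sum_(r < N) (r : nat)%:Z.
Proof.
have := G_sum N (fun r c => sgc N fo r c * r%:Z) => /= ->.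
rewrite mulr_sumr; apply: eq_bigr => r _; exact: rowr.
Qed.

Definition cP N (P : pred 'I_N) : int := \sum_(j | P j) 1.
Definition sP N (P : pred 'I_N) : int := \sum_(j | P j) (j : nat)%:Z.

Lemma lin N (P : pred 'I_N) (F : 'I_N -> int) a b : (forall j, F j = a * (j : nat)%:Z + b) ->
  \sum_(j | P j) F j = a * sP P + b * cP P.
Proof.
move=> H; rewrite /sP /cP (eq_bigr _ (fun j _ => H j)) big_split /= -!mulr_sumr.
by rewrite [X in _ = _ + X]mulr_sumr; congr (_ + _); apply: eq_bigr => j _; rewrite mulr1.
Qed.

Lemma RX N fo (P : pred 'I_N) :
  \sum_(j | P j) sg fo (Rpt j) * colz (Rpt j) = - sgn fo * (sP P + (N%:Z + 1) * cP P).
Proof.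
rewrite (@lin _ _ _ (- sgn fo) (- sgn fo * (N%:Z + 1))); first ring.
by move=> j; rewrite sgR /colz /= !PoszD; ring.
Qed.
Lemma BX N fo (P : pred 'I_N) :
  \sum_(j | P j) sg fo (Bpt j) * colz (Bpt j) = sgn fo * (2 * sP P + cP P).
Proof.
rewrite (@lin _ _ _ (2 * sgn fo) (sgn fo)); first ring.
by move=> j; rewrite sgB /colz /= -muln2 -addn1 !PoszD PoszM; ring.
Qed.
Lemma LX N fo (P : pred 'I_N) :
  \sum_(j | P j) sg fo (Lpt j) * colz (Lpt j) = - sgn fo * sP P.
Proof.
rewrite (@lin _ _ _ (- sgn fo) 0); first ring.
by move=> j; rewrite sgL /colz /=; ring.
Qed.
Lemma RY N fo (P : pred 'I_N) :
  \sum_(j | P j) sg fo (Rpt j) * rowz (Rpt j) = - sgn fo * sP P.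
Proof.
rewrite (@lin _ _ _ (- sgn fo) 0); first ring.
by move=> j; rewrite sgR /rowz /=; ring.
Qed.
Lemma BY N fo (P : pred 'I_N) :
  \sum_(j | P j) sg fo (Bpt j) * rowz (Bpt j) = sgn fo * ((N%:Z - 1) * cP P).
Proof.
rewrite (@lin _ _ _ 0 (sgn fo * (N%:Z - 1))); first ring.
move=> j; rewrite sgB /rowz /=; have hj := ltn_ord j.
have E : (N.-1)%N%:Z + 1 = N%:Z by rewrite -!PoszD; congr Posz; lia.
have -> : (N.-1)%N%:Z = N%:Z - 1 by rewrite -E; ring.
ring.
Qed.
Lemma LY N fo (P : pred 'I_N) :
  \sum_(j | P j) sg fo (Lpt j) * rowz (Lpt j) = - sgn fo * ((N%:Z - 1) * cP P - sP P).
Proof.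
rewrite (@lin _ _ _ (sgn fo) (- sgn fo * (N%:Z - 1))); first ring.
move=> j; rewrite sgL /rowz /=; have hj := ltn_ord j.
have E : (N.-1 - j)%N%:Z + (j : nat)%:Z + 1 = N%:Z by rewrite -!PoszD; congr Posz; lia.
have -> : (N.-1 - j)%N%:Z = N%:Z - 1 - (j : nat)%:Z by rewrite -E; ring.
ring.
Qed.

Definition allT N : pred 'I_N := fun _ => true.

Lemma cP_nat N (P : pred 'I_N) : cP P = (\sum_j (P j : nat))%N%:Z.
Proof. rewrite /cP -natz natr_sum big_mkcond /=; apply: eq_bigr => j _; by case: (P j). Qed.
Lemma sP_nat N (P : pred 'I_N) : sP P = (\sum_j (P j : nat) * (j : nat))%N%:Z.
Proof.
rewrite /sP -natz natr_sum big_mkcond /=; apply: eq_bigr => j _; case: (P j) => /=.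
  by rewrite mul1n natz.
by rewrite mul0n.
Qed.

Lemma cP_T N : cP (@allT N) = N%:Z.
Proof. rewrite cP_nat; congr Posz; rewrite -[RHS]card_ord -sum1_card; exact: eq_bigr. Qed.

Lemma sP_T N : 2 * sP (@allT N) = N%:Z * N%:Z - N%:Z.
Proof.
rewrite /sP; elim: N => [|N IH]; first by rewrite big_ord0.
rewrite big_ord_recr /= mulrDr IH /= -(addn1 N) PoszD; ring.
Qed.

Lemma Grow N : \sum_(r < N) (r.*2 + 3)%N%:Z = 2 * sP (@allT N) + 3 * N%:Z.
Proof.
rewrite -cP_T (@lin _ _ _ 2 3) //; last by move=> j; rewrite -muln2 PoszD PoszM; ring.
Qed.

Lemma sumT N (F : 'I_N -> int) : \sum_(r < N) F r = \sum_(r | @allT N r) F r.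
Proof. by []. Qed.

Lemma nzeros_sum N (t : N.-tuple bool) : nzeros t = \sum_(j < N) (~~ tnth t j : nat).
Proof.
rewrite /nzeros -sum1_count big_tuple big_mkcond /=; apply: eq_bigr => j _.
by case: (tnth t j).
Qed.

Lemma ones_sum N (t : N.-tuple bool) : \sum_(j < N) (tnth t j : nat) = (N - nzeros t)%N.
Proof.
have : \sum_(j < N) (tnth t j : nat) + \sum_(j < N) (~~ tnth t j : nat) = N.
  rewrite -big_split /= -[RHS]card_ord -sum1_card; apply: eq_bigr => j _; by case: (tnth t j).
rewrite -nzeros_sum; lia.
Qed.

Lemma cP_neg N (t : N.-tuple bool) : cP (fun j => ~~ tnth t j) = (nzeros t)%:Z.
Proof. by rewrite cP_nat nzeros_sum. Qed.
Lemma cP_pos N (t : N.-tuple bool) : cP (fun j => tnth t j) = N%:Z - (nzeros t)%:Z.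
Proof.
rewrite cP_nat ones_sum -subzn //; rewrite nzeros_sum -[X in (_ <= X)%N]card_ord -sum1_card.
by apply: leq_sum => j _; case: (tnth t j).
Qed.

Lemma sP_neg N (t : N.-tuple bool) :
  2 * sP (fun j => ~~ tnth t j) = 2 * (dw t)%:Z + (nzeros t)%:Z * (nzeros t)%:Z - (nzeros t)%:Z.
Proof.
rewrite sP_nat.
have h1 := dw_zeros t.
have h2 := @pairs N (fun j => ~~ tnth t j); cbv beta in h2.
rewrite expnS expn1 -nzeros_sum in h2.
move: h1 h2; set S0 := (\sum_(j < N) _)%N; set S1 := (\sum_i \sum_j _)%N.
rewrite -/S0; lia.
Qed.

Lemma sP_pos N (t : N.-tuple bool) : (0 < N)%N ->
  2 * (dw t)%:Z + 2 * sP (fun j => tnth t j) + (N%:Z - (nzeros t)%:Z) * (N%:Z - (nzeros t)%:Z)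
   - (N%:Z - (nzeros t)%:Z) = 2 * (N%:Z - (nzeros t)%:Z) * (N%:Z - 1).
Proof.
move=> hN; rewrite sP_nat.
have h1 := dw_ones t.
have h2 := @pairs N (fun j => tnth t j); cbv beta in h2.
rewrite expnS expn1 in h2.
have h3 : (\sum_(i < N) (tnth t i : nat) * (N - i.+1) + \sum_(j < N) (tnth t j : nat) * j
          = \sum_(j < N) (tnth t j : nat) * (N - 1))%N.
  rewrite -big_split /=; apply: eq_bigr => j _; have := ltn_ord j; rewrite -mulnDr => hj.
  congr (_ * _)%N; lia.
rewrite -big_distrl /= in h3.
have h5 := ones_sum t.
have h6 : (nzeros t <= N)%N by rewrite nzeros_sum -[X in (_ <= X)%N]card_ord -sum1_card; apply: leq_sum => j _; case: (tnth t j).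
move: h1 h2 h3 h5; set S0 := (\sum_(j < N) (tnth t j : nat) * j)%N; set S1 := (\sum_i \sum_j _)%N.
set C := (\sum_(j < N) (tnth t j : nat))%N; set S2 := (\sum_(i < N) _)%N.
move=> h1 h2 h3 h5.

nia.
Qed.


Lemma half_tri (n : nat) (s : int) : 2 * s = n%:Z * n%:Z - n%:Z -> ((n * (n - 1)) %/ 2)%N%:Z = s.
Proof.
have hm : (n * (n - 1))%N%:Z = n%:Z * n%:Z - n%:Z.
  rewrite PoszM; case: n => [|n] //; rewrite subSS subn0 -(addn1 n) PoszD; ring.
move: (n * (n - 1))%N hm => m hm; lia.
Qed.

Lemma Go_eq N (u w : N.-tuple bool) :
  Go_set u w = Gset (@allT N) (fun j => ~~ tnth w j) (fun j => ~~ tnth u j).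
Proof.
apply/setP => p; rewrite !inE.
have -> : [forall j, ~~ (Rv j p && @allT N j)] = [forall j, ~~ Rv j p].
  by apply: eq_forallb => j; rewrite /allT andbT.
by [].
Qed.

Lemma Ge_eq N (v w : N.-tuple bool) :
  Ge_set v w = Gset (fun j => tnth v j) (fun j => tnth w j) (@allT N).
Proof.
apply/setP => p; rewrite !inE.
have -> : [forall j, ~~ (Lv j p && @allT N j)] = [forall j, ~~ Lv j p].
  by apply: eq_forallb => j; rewrite /allT andbT.
by case: (inG p); case: [forall j, ~~ Lv j p]; case: [forall j, ~~ (Bv j p && tnth w j)];
   case: [forall j, ~~ (Rv j p && tnth v j)].
Qed.

Unset Implicit Arguments.

Theorem theorem3p5 (N : nat) (hN : (0 < N)%N) (u v w : N.-tuple bool)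
  (hu : nzeros u = nzeros w) (hv : nzeros v = nzeros w) :
  let N0 := nzeros w in
  let N1 := (N - N0)%N in
  (forall M : {set {set vtx N}}, perfect_matching (Go_set u w) M ->
     [/\ (oU M + oD M + oR M + oL M = (N * (N - 1)) %/ 2 + N1)%N,
         ((oL M + oD M)%:Z = (dw w)%:Z - (dw u)%:Z) &
         (oU M + oL M = (N0 * (N0 - 1)) %/ 2 + dw w)%N])
  /\
  (forall M : {set {set vtx N}}, perfect_matching (Ge_set v w) M ->
     [/\ (eU M + eD M + eR M + eL M = (N * (N - 1)) %/ 2 + N0)%N,
         ((eL M + eU M)%:Z = (dw w)%:Z - (dw v)%:Z) &
         (eD M + eL M = (N1 * (N1 - 1)) %/ 2 + dw w)%N]).
Proof.
move=> N0 N1; split => M pm.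
- rewrite Go_eq in pm.
  have [T C X Y] := pm_facts true pm.
  rewrite Gset_sum G1 Grow in C.
  rewrite Gset_sum GX RX BX LX in X.
  rewrite Gset_sum GY RY BY LY sumT in Y.
  rewrite -/(cP (@allT N)) -/(cP (fun j => ~~ tnth w j)) -/(cP (fun j => ~~ tnth u j)) in C.
  rewrite -/(sP (@allT N)) in Y.
  rewrite !cP_T !cP_neg /sgn in C X Y.
  have e1 := sP_T N; have e2 := sP_neg w; have e3 := sP_neg u.
  rewrite /oU /oD /oL /oR /N1 /N0.
  move: T C X Y e1 e2 e3; rewrite hu.
  set a := ndir true _ M; set b := ndir true _ M; set c := ndir true _ M; set d := ndir true _ M.
  set sT := sP _; set sw := sP _; set su := sP _.
  move=> T C X Y e1 e2 e3.
  split; nia.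
- rewrite Ge_eq in pm.
  have [T C X Y] := pm_facts false pm.
  rewrite Gset_sum G1 Grow in C.
  rewrite Gset_sum GX RX BX LX in X.
  rewrite Gset_sum GY RY BY LY sumT in Y.
  rewrite -/(cP (@allT N)) -/(cP (fun j => tnth v j)) -/(cP (fun j => tnth w j)) in C.
  rewrite -/(sP (@allT N)) in Y.
  rewrite !cP_T !cP_pos /sgn in C X Y.
  have e1 := sP_T N; have e2 := sP_pos w hN; have e3 := sP_pos v hN.
  rewrite /eU /eD /eL /eR /N1 /N0.
  move: T C X Y e1 e2 e3; rewrite hv.
  set a := ndir false _ M; set b := ndir false _ M; set c := ndir false _ M; set d := ndir false _ M.
  set sT := sP _; set sw := sP _; set sv := sP _.
  move=> T C X Y e1 e2 e3.
  have hZ : (nzeros w <= N)%N by rewrite nzeros_sum -[X in (_ <= X)%N]card_ord -sum1_card; apply: leq_sum => j _; case: (tnth w j).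
  have hO : (N - nzeros w)%N%:Z = N%:Z - (nzeros w)%:Z by rewrite subzn.
  rewrite -hO in C X Y e2 e3.
  move: (N - nzeros w)%N hO C X Y e2 e3 => O hO C X Y e2 e3.
  have h1 := half_tri e1.
  split.
  - lia.
  - lia.
  - have h3 : ((O * (O - 1)) %/ 2)%N%:Z = (b + c)%N%:Z - (dw w)%:Z by apply: half_tri; lia.
    lia.
Qed.
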